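(* Let $\mathbb{X}=[-1,1]$ with prior $\zeta$ the uniform distribution, $\mathbb{Y}^1=\{1,2,3\}$, $\mathbb{Y}^2=\{0\}$, $\mathbb{U}^1=\mathbb{U}^2=[-1,1]$. For $m\ge1$ let $\mu_m$ be the information structure in which $y^2=0$ always and $y^1=1$ if $x\in[-1,-\tfrac12-\tfrac1{8m})$, $y^1=2$ if $x\in[-\tfrac12-\tfrac1{8m},\tfrac12+\tfrac1{4m}]$, $y^1=3$ if $x\in(\tfrac12+\tfrac1{4m},1]$; let $\mu$ be the information structure with $y^2=0$ always and $y^1=1,2,3$ according as $x\in[-1,-\tfrac12)$, $[-\tfrac12,\tfrac12]$, $(\tfrac12,1]$. Consider the two-player non-zero-sum game with costs $$c^1(x,u^1,u^2)=(x-u^1)^2-(u^2)^2,\qquad c^2(x,u^1,u^2)=\begin{cases}(u^2)^2,&u^1=0,\\(u^2-1)^2,&u^1\ne0.\end{cases}$$ Then $\|\mu_m-\mu\|_{TV}\to0$; for every $m$, in every Nash equilibrium under $\mu_m$ Player 2's expected cost is $0$, whereas in every Nash equilibrium under $\mu$ Player 2's expected cost is $1/4$. Hence, in general non-zero-sum games with bounded measurable costs, a player's equilibrium cost need not be continuous under total variation convergence of information structures.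
   Context: An information structure is the joint law of $(x,y^1,y^2)$ on $\mathbb{X}\times\mathbb{Y}^1\times\mathbb{Y}^2$. Player $i$ chooses a measurable policy $\gamma^i:\mathbb{Y}^i\to\mathbb{U}^i$ and incurs expected cost $J^i(\mu,\gamma^1,\gamma^2)=E^\mu[c^i(x,\gamma^1(y^1),\gamma^2(y^2))]$, which each player seeks to minimize. A Nash equilibrium is a pair $(\gamma^{1,*},\gamma^{2,*})$ such that $J^1(\mu,\gamma^{1,*},\gamma^{2,*})\le J^1(\mu,\gamma^1,\gamma^{2,*})$ and $J^2(\mu,\gamma^{1,*},\gamma^{2,*})\le J^2(\mu,\gamma^{1,*},\gamma^2)$ for all policies $\gamma^1,\gamma^2$. $\|\mu-\nu\|_{TV}=2\sup_B|\mu(B)-\nu(B)|$. *)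

(* Defs.v *)
From HB Require Import structures.
From mathcomp Require Import all_boot all_order all_algebra.
From mathcomp Require Import all_classical all_reals all_analysis.

Set Implicit Arguments.
Unset Strict Implicit.
Unset Printing Implicit Defensive.

Import Order.TTheory GRing.Theory Num.Theory.
Import numFieldNormedType.Exports.

Local Open Scope classical_set_scope.
Local Open Scope ring_scope.

(* Observation space of player 1, Y^1 = {1,2,3}: the ordinal k : 'I_3
   stands for the observation k+1. *)
Definition Y1 : Type := 'I_3.
HB.instance Definition _ := Choice.on Y1.
HB.instance Definition _ := isPointed.Build Y1 (@ord0 2).
HB.instance Definition _ := @isMeasurable.Build default_measure_display
  Y1 discrete_measurable discrete_measurable0
  discrete_measurableC discrete_measurableU.

Definition y_1 : Y1 := @Ordinal 3 0 erefl.
Definition y_2 : Y1 := @Ordinal 3 1 erefl.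
Definition y_3 : Y1 := @Ordinal 3 2 erefl.

(* Y^2 = {0} is the one-point type unit. X = [-1,1] is realized inside R,
   the prior being the uniform law on [-1,1]. *)
Definition Omega (R : realType) : Type := ((R * Y1) * unit)%type.

Lemma ltN11 (R : realType) : (-1 < 1 :> R).
Proof. by rewrite gtrN. Qed.

Definition zeta (R : realType) := uniform_prob (ltN11 R).

Definition obs (R : realType) (a b : R) (x : R) : Y1 :=
  if x < a then y_1 else if x <= b then y_2 else y_3.

(* P is the information structure (joint law of (x,y^1,y^2)) induced by the
   uniform prior and the observation map obs a b, with y^2 = 0 always *)
Definition is_info_structure (R : realType) (P : probability (Omega R) R)
  (a b : R) : Prop :=
  forall B : set (Omega R), measurable B ->
    P B = @zeta R ((fun x => ((x, obs a b x), tt)) @^-1` B).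

Definition policy1 (R : realType) (g : Y1 -> R) : Prop :=
  measurable_fun setT g /\ forall y, -1 <= g y <= 1.
Definition policy2 (R : realType) (g : unit -> R) : Prop :=
  measurable_fun setT g /\ forall y, -1 <= g y <= 1.

Definition c1 (R : realType) (x u1 u2 : R) : R := (x - u1) ^+ 2 - u2 ^+ 2.
Definition c2 (R : realType) (x u1 u2 : R) : R :=
  if u1 == 0 then u2 ^+ 2 else (u2 - 1) ^+ 2.

Definition J (R : realType) (P : probability (Omega R) R)
  (c : R -> R -> R -> R) (g1 : Y1 -> R) (g2 : unit -> R) : \bar R :=
  (\int[P]_w (c w.1.1 (g1 w.1.2) (g2 w.2))%:E)%E.

Definition Nash (R : realType) (P : probability (Omega R) R)
  (g1 : Y1 -> R) (g2 : unit -> R) : Prop :=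
  [/\ policy1 g1, policy2 g2,
      (forall g1', policy1 g1' -> (J P (@c1 R) g1 g2 <= J P (@c1 R) g1' g2)%E) &
      (forall g2', policy2 g2' -> (J P (@c2 R) g1 g2 <= J P (@c2 R) g1 g2')%E)].

Definition tv (R : realType) (P Q : probability (Omega R) R) : \bar R :=
  (2%:E * ereal_sup [set `|P B - Q B|%E | B in [set B | measurable B]])%E.

(* Main.v *)
Require Import Defs.
From HB Require Import structures.
From mathcomp Require Import all_boot all_order all_algebra.
From mathcomp Require Import all_classical all_reals all_analysis.
From mathcomp Require Import measurable_realfun ftc.

Import Order.TTheory GRing.Theory Num.Theory.
Import numFieldNormedType.Exports.

Local Open Scope classical_set_scope.
Local Open Scope ring_scope.

From mathcomp Require Import ring lra.
Section S.
Variable R : realType.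
Local Notation mu := (@lebesgue_measure R).

Lemma split3 (a b : R) : -1 <= a -> a <= b -> b <= 1 ->
  `[-1, 1]%classic = `[-1, a[%classic `|` `[a, b]%classic `|` `]b, 1]%classic :> set R.
Proof.
move=> h1 h2 h3; apply/seteqP; split => x /=; rewrite !in_itv/=.
  move=> /andP[x1 x2].
  case: (ltP x a) => xa; first by left; left; rewrite x1.
  case: (leP x b) => xb; first by left; right.
  by right; rewrite x2.
move=> [[/andP[p q]|/andP[p q]]|/andP[p q]]; apply/andP; split; lra.
Qed.


Lemma Y1_mfun d (T : measurableType d) (f : Y1 -> T) : measurable_fun setT f.
Proof. move=> _ Y _; exact: I. Qed.

Lemma obs_mfun (a b : R) : measurable_fun setT (obs a b).
Proof.
rewrite /obs; apply: measurable_fun_if => //.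
  by apply: measurable_fun_ltr => //; exact: measurable_cst.
apply: measurable_funTS; apply: measurable_fun_if => //.
by apply: measurable_fun_ler => //; exact: measurable_cst.
Qed.

Definition phi (a b : R) (x : R) : Omega R := ((x, obs a b x), tt).

Lemma phi_mfun (a b : R) : measurable_fun setT (phi a b).
Proof.
apply: measurable_fun_pair; last exact: measurable_cst.
apply: measurable_fun_pair => //; exact: obs_mfun.
Qed.

Definition phiX (a b : R) : {mfun g_sigma_algebraType (R.-ocitv.-measurable) >-> Omega R} :=
  HB.pack (phi a b) (@isMeasurableFun.Build _ _ (g_sigma_algebraType (R.-ocitv.-measurable)) (Omega R) (phi a b) (phi_mfun a b)).

Lemma core (P : probability (Omega R) R) (a b : R) :
  -1 < a -> a <= b -> b < 1 -> is_info_structure P a b ->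
  forall f : Omega R -> R, measurable_fun setT f -> (forall w, 0 <= f w) ->
  (\int[P]_w (f w)%:E = 2^-1%:E * (\int[mu]_(x in `[(-1)%R, a[) (f ((x, y_1), tt))%:E
     + \int[mu]_(x in `[a, b]) (f ((x, y_2), tt))%:E
     + \int[mu]_(x in `]b, 1%R]) (f ((x, y_3), tt))%:E))%E.
Proof.
move=> ha hab hb HP f mf f0.
rewrite (eq_measure_integral (distribution (@zeta R) (phiX a b))); last first.
  by move=> A mA _; exact: (HP A mA).
rewrite ge0_integral_distribution//; last exact/measurable_EFinP.
rewrite integral_uniform//=; last 2 first.
- apply/measurable_EFinP; apply: measurableT_comp => //; exact: phi_mfun.
- by move=> x; rewrite lee_fin.
have mfp : measurable_fun setT (fun x => (f (phi a b x))%:E).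
  apply/measurable_EFinP; apply: measurableT_comp => //; exact: phi_mfun.
congr (_ * _)%E; first by rewrite opprK.
rewrite (@split3 a b (ltW ha) hab (ltW hb)).
rewrite ge0_integral_setU //=; last 4 first.
- exact: measurableU.
- exact: measurable_funTS.
- by move=> x _; rewrite lee_fin.
- apply/disj_setPS => x; rewrite /= !in_itv/= => -[[/andP[p q]|/andP[p q]] /andP[p' q']]; lra.
rewrite ge0_integral_setU //=; last 3 first.
- exact: measurable_funTS.
- by move=> x _; rewrite lee_fin.
- apply/disj_setPS => x; rewrite /= !in_itv/= => -[/andP[p q] /andP[p' q']]; lra.
congr (_ + _)%E; first congr (_ + _)%E.
- apply: eq_integral => x; rewrite inE/= in_itv/= => /andP[p q].
  by rewrite /phi /obs q.
- apply: eq_integral => x; rewrite inE/= in_itv/= => /andP[p q].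
  by rewrite /phi /obs ltNge p q.
- apply: eq_integral => x; rewrite inE/= in_itv/= => /andP[p q].
  by rewrite /phi /obs ltNge (ltW (le_lt_trans hab p)) /= leNgt p.
Qed.


Lemma Fder (v x : R) : is_derive x 1 (fun x : R => (x - v)^+3 / 3) ((x - v)^+2).
Proof.
apply: is_derive_eq.
by rewrite -![_ *: _]/(_ * _); field.
Qed.

Lemma Fcont (v : R) : continuous (fun x : R => (x - v)^+3 / 3).
Proof. by move=> x; apply/differentiable_continuous/derivable1_diffP; case: (Fder v x). Qed.

Lemma intQ (c d v : R) : c < d ->
  (\int[mu]_(x in `[c, d]) ((x - v)^+2)%:E = (((d - v)^+3 - (c - v)^+3) / 3)%:E)%E.
Proof.
move=> cd.
rewrite (@continuous_FTC2 _ _ (fun x : R => (x - v)^+3 / 3)) //.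
- by rewrite -EFinB mulrBl.
- apply: continuous_in_subspaceT => x _.
  by apply/differentiable_continuous/derivable1_diffP; exact: ex_derive.
- split.
  + by move=> x _; case: (Fder v x).
  + by apply: cvg_at_right_filter; exact: Fcont.
  + by apply: cvg_at_left_filter; exact: Fcont.
- by move=> x _; rewrite derive1E; apply: derive_val; exact: Fder.
Qed.

Definition Q (c d v : R) := ((d - v)^+3 - (c - v)^+3) / 3.

Lemma J2E (P : probability (Omega R) R) (a b : R) :
  -1 < a -> a < b -> b < 1 -> is_info_structure P a b -> forall g1 g2,
  J P (@c2 R) g1 g2 = (2^-1 * ((a + 1) * c2 0 (g1 y_1) (g2 tt)
     + (b - a) * c2 0 (g1 y_2) (g2 tt) + (1 - b) * c2 0 (g1 y_3) (g2 tt)))%:E.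
Proof.
move=> ha hab hb HP g1 g2.
pose f (w : Omega R) := c2 0 (g1 w.1.2) (g2 tt).
rewrite /J (eq_integral (fun w => (f w)%:E)); last by move=> [[x y] []] _.
rewrite (@core P a b ha (ltW hab) hb HP f); last 2 first.
- apply: (measurableT_comp (f := fun y => c2 0 (g1 y) (g2 tt))) => //.
  by apply: measurableT_comp => //.
- by move=> w; rewrite /f /c2; case: ifP => _; exact: sqr_ge0.
rewrite /f /= !integral_cst //= !lebesgue_measure_itv /= !lte_fin ha hab hb.
rewrite -!EFinD -!EFinM; congr (_%:E); ring.
Qed.


Lemma J1E (P : probability (Omega R) R) (a b : R) :
  -1 < a -> a < b -> b < 1 -> is_info_structure P a b -> forall g1 g2,
  J P (@c1 R) g1 g2 = (2^-1 * (Q (-1) a (g1 y_1) + Q a b (g1 y_2) + Q b 1 (g1 y_3))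
     - (g2 tt)^+2)%:E.
Proof.
move=> ha hab hb HP g1 g2.
pose h (w : Omega R) := (w.1.1 - g1 w.1.2)^+2.
have mh : measurable_fun setT h.
  apply: measurable_funX; apply: measurable_funB.
    by apply: measurableT_comp => //; apply: measurableT_comp.
  apply: (measurableT_comp (f := g1)) => //.
  by apply: measurableT_comp.
have hE : (\int[P]_w (h w)%:E = (2^-1 * (Q (-1) a (g1 y_1) + Q a b (g1 y_2) + Q b 1 (g1 y_3)))%:E)%E.
  rewrite (@core P a b ha (ltW hab) hb HP h mh); last by move=> w; exact: sqr_ge0.
  rewrite /h /= integral_itv_bndo_bndc; last first.
    by apply/measurable_EFinP; apply: measurable_funX; apply: measurable_funB.
  rewrite integral_itv_obnd_cbnd; last first.
    by apply/measurable_EFinP; apply: measurable_funX; apply: measurable_funB.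
  rewrite !intQ //.
have ih : P.-integrable setT (EFin \o h).
  apply/integrableP; split; first exact/measurable_EFinP.
  rewrite (eq_integral (fun w => (h w)%:E)); last first.
 move=> w _; change ((EFin \o h) w) with ((h w)%:E).
 by rewrite abse_EFin ger0_norm // sqr_ge0.
  by rewrite hE ltry.
rewrite /J (eq_integral (fun w => (h w)%:E - ((g2 tt)^+2)%:E)%E); last first.
  by move=> [[x y] []] _; rewrite /c1 /h EFinB.
rewrite integralB_EFin //; last exact: finite_measure_integrable_cst.
rewrite integral_cst // [X in (_ * X)%E](_ : _ = 1%E); last exact: probability_setT.
by rewrite mule1 hE -EFinB.
Qed.

Definition mids (a b : R) : Y1 -> R := fun y =>
  if y == y_1 then (-1 + a) / 2 else if y == y_2 then (a + b) / 2 else (b + 1) / 2.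

Lemma mids1 a b : mids a b y_1 = (-1 + a) / 2. Proof. by []. Qed.
Lemma mids2 a b : mids a b y_2 = (a + b) / 2. Proof. by []. Qed.
Lemma mids3 a b : mids a b y_3 = (b + 1) / 2. Proof. by []. Qed.

Lemma mids_policy a b : -1 < a -> a < b -> b < 1 -> policy1 (mids a b).
Proof.
move=> ha hab hb; split; first exact: Y1_mfun.
move=> y; rewrite /mids; case: ifP => _; last case: ifP => _; apply/andP; split; lra.
Qed.

Lemma Qm c d v : Q c d v = Q c d ((c + d) / 2) + (d - c) * (v - (c + d) / 2)^+2.
Proof. by rewrite /Q; field. Qed.

Lemma sum3_0 (x y z : R) : 0 <= x -> 0 <= y -> 0 <= z -> x + y + z <= 0 ->
  [/\ x = 0, y = 0 & z = 0].
Proof. move=> *; split; lra. Qed.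

Lemma wsq0 (w t : R) : 0 < w -> w * t^+2 = 0 -> t = 0.
Proof.
move=> w0 /eqP; rewrite mulf_eq0 (gt_eqF w0) /= sqrf_eq0 => /eqP //.
Qed.

Lemma S_le (a b : R) (g g' : Y1 -> R) :
  Q (-1) a (g y_1) + Q a b (g y_2) + Q b 1 (g y_3) <=
  Q (-1) a (g' y_1) + Q a b (g' y_2) + Q b 1 (g' y_3) <->
  (a - -1) * (g y_1 - (-1 + a) / 2)^+2 + (b - a) * (g y_2 - (a + b) / 2)^+2
    + (1 - b) * (g y_3 - (b + 1) / 2)^+2 <=
  (a - -1) * (g' y_1 - (-1 + a) / 2)^+2 + (b - a) * (g' y_2 - (a + b) / 2)^+2
    + (1 - b) * (g' y_3 - (b + 1) / 2)^+2.
Proof.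
rewrite (Qm (-1) a (g y_1)) (Qm a b (g y_2)) (Qm b 1 (g y_3)).
rewrite (Qm (-1) a (g' y_1)) (Qm a b (g' y_2)) (Qm b 1 (g' y_3)).
split => h; lra.
Qed.

Lemma nash_mid (P : probability (Omega R) R) (a b : R) :
  -1 < a -> a < b -> b < 1 -> is_info_structure P a b -> forall g1 g2,
  Nash P g1 g2 -> forall y, g1 y = mids a b y.
Proof.
move=> ha hab hb HP g1 g2 [pg1 pg2 H1 H2].
have := H1 _ (mids_policy a b ha hab hb).
rewrite !(@J1E P a b ha hab hb HP) lee_fin lerD2r ler_pM2l; last by [].
move/S_le; rewrite mids1 mids2 mids3 !subrr expr0n /= !mulr0 !addr0.
move/sum3_0 => [].
- by apply: mulr_ge0; [lra|exact: sqr_ge0].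
- by apply: mulr_ge0; [lra|exact: sqr_ge0].
- by apply: mulr_ge0; [lra|exact: sqr_ge0].
move=> /wsq0 e1 /wsq0 e2 /wsq0 e3.
have {}e1 := e1 ltac:(lra); have {}e2 := e2 ltac:(lra); have {}e3 := e3 ltac:(lra).
move=> y; have : y = y_1 \/ y = y_2 \/ y = y_3.
  case: y => -[|[|[|n]]] Hn //=; [left|right;left|right;right]; exact: val_inj.
by move=> [->|[->|->]]; rewrite ?mids1 ?mids2 ?mids3; lra.
Qed.

Lemma mids_best (P : probability (Omega R) R) (a b : R) :
  -1 < a -> a < b -> b < 1 -> is_info_structure P a b -> forall g2 g1',
  (J P (@c1 R) (mids a b) g2 <= J P (@c1 R) g1' g2)%E.
Proof.
move=> ha hab hb HP g2 g1'.
rewrite !(@J1E P a b ha hab hb HP) lee_fin lerD2r ler_pM2l; last by [].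
apply/S_le; rewrite mids1 mids2 mids3 !subrr expr0n /= !mulr0 !addr0.
apply: addr_ge0; first apply: addr_ge0; apply: mulr_ge0; try exact: sqr_ge0; lra.
Qed.

Lemma pcst (c : R) : -1 <= c <= 1 -> policy2 (fun _ : unit => c).
Proof. by move=> hc; split => //; exact: measurable_cst. Qed.

Lemma case_m (P : probability (Omega R) R) (a b : R) :
  -1 < a -> a < b -> b < 1 -> is_info_structure P a b ->
  ((-1 + a) / 2 != 0) -> ((a + b) / 2 != 0) -> ((b + 1) / 2 != 0) ->
  (exists g1 g2, Nash P g1 g2) /\
  (forall g1 g2, Nash P g1 g2 -> J P (@c2 R) g1 g2 = 0%E).
Proof.
move=> ha hab hb HP h1 h2 h3.
have J2m g1 g2 : (forall y, g1 y = mids a b y) ->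
    J P (@c2 R) g1 g2 = ((g2 tt - 1)^+2)%:E.
  move=> H; rewrite (@J2E P a b ha hab hb HP) !H mids1 mids2 mids3 /c2.
  rewrite (negbTE h1) (negbTE h2) (negbTE h3); by congr (_%:E); field.
have p1 : -1 <= (1 : R) <= 1 by apply/andP; split; lra.
split.
- exists (mids a b); exists (fun _ => 1).
  split.
  + exact: (mids_policy _ _ ha hab hb).
  + exact: (pcst _ p1).
  + by move=> g1' _; exact: (mids_best P _ _ ha hab hb HP).
  + move=> g2' _; rewrite !J2m // subrr expr0n /= lee_fin; exact: sqr_ge0.
- move=> g1 g2 N; have hm := nash_mid P _ _ ha hab hb HP _ _ N.
  case: N => _ _ _ H2; have := H2 _ (pcst _ p1).
  rewrite !J2m // subrr expr0n /= lee_fin => le.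
  congr (_%:E); apply/le_anti/andP; split => //; exact: sqr_ge0.
Qed.

Lemma case_mu (P : probability (Omega R) R) :
  is_info_structure P (- 2^-1) (2^-1) ->
  (exists g1 g2, Nash P g1 g2) /\
  (forall g1 g2, Nash P g1 g2 -> J P (@c2 R) g1 g2 = (4^-1)%:E).
Proof.
move=> HP.
have ha : -1 < - 2^-1 :> R by lra.
have hab : - 2^-1 < 2^-1 :> R by lra.
have hb : 2^-1 < 1 :> R by lra.
have J2m g1 g2 : (forall y, g1 y = mids (- 2^-1) (2^-1) y) ->
    J P (@c2 R) g1 g2 = (2^-1 * ((g2 tt - 1)^+2 + (g2 tt)^+2))%:E.
  move=> H; rewrite (@J2E P _ _ ha hab hb HP) !H mids1 mids2 mids3 /c2.
  have -> : (-1 + - 2^-1) / 2 == 0 :> R = false by apply/negbTE; apply/eqP; lra.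
  have -> : (- 2^-1 + 2^-1) / 2 == 0 :> R = true by apply/eqP; lra.
  have -> : (2^-1 + 1) / 2 == 0 :> R = false by apply/negbTE; apply/eqP; lra.
  by congr (_%:E); field.
have p1 : -1 <= (2^-1 : R) <= 1 by apply/andP; split; lra.
split.
- exists (mids (- 2^-1) (2^-1)), (fun _ => 2^-1); split.
  + exact: (mids_policy _ _ ha hab hb).
  + exact: (pcst _ p1).
  + by move=> g1' _; exact: (mids_best P _ _ ha hab hb HP).
  + move=> g2' _; rewrite !J2m // lee_fin /=.
    set u := g2' tt; have := sqr_ge0 (2 * u - 1); nra.
- move=> g1 g2 N; have hm := nash_mid P _ _ ha hab hb HP _ _ N.
  case: N => _ _ _ H2; have := H2 _ (pcst _ p1).
  rewrite !J2m // lee_fin /= => le.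
  congr (_%:E); set u := g2 tt; move: le; rewrite -/u => le.
  have := sqr_ge0 (2 * u - 1); move=> hs.
  apply/le_anti/andP; split; nra.
Qed.

Lemma zeta_le (A : set R) : measurable A -> (@zeta R A <= (2^-1)%:E * mu A)%E.
Proof.
move=> mA; rewrite -integral_cst //.
rewrite /zeta /uniform_prob /=.
apply: ge0_le_integral => //.
- by move=> x _; rewrite lee_fin uniform_pdf_ge0 // ltN11.
- apply/measurable_EFinP; apply: measurable_funTS; exact: measurable_uniform_pdf.
- move=> x _; rewrite lee_fin /uniform_pdf; case: ifP => _; last lra.
  by rewrite opprK.
Qed.

Lemma P_le (P P' : probability (Omega R) R) (a b a' b' : R) (E : set R) :
  is_info_structure P a b -> is_info_structure P' a' b' -> measurable E ->
  (forall x, ~ E x -> obs a b x = obs a' b' x) ->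
  forall B, measurable B -> (P B <= P' B + @zeta R E)%E.
Proof.
move=> HP HP' mE hE B mB.
rewrite (HP B mB) (HP' B mB).
have m1 : measurable ((fun x => (x, obs a b x, tt)) @^-1` B).
  by rewrite -[X in measurable X]setTI; exact: (phi_mfun a b).
have m2 : measurable ((fun x => (x, obs a' b' x, tt)) @^-1` B).
  by rewrite -[X in measurable X]setTI; exact: (phi_mfun a' b').
apply: (le_trans (le_measure _ _ _ _)); last exact: measureU2.
- by rewrite inE.
- by rewrite inE; exact: measurableU.
move=> x /= Bx; have [Ex|nEx] := pselect (E x); first by right.
by left; rewrite /= -(hE x nEx).
Qed.

Lemma tv_le (P P' : probability (Omega R) R) (a b a' b' : R) (E : set R) :
  is_info_structure P a b -> is_info_structure P' a' b' -> measurable E ->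
  (forall x, ~ E x -> obs a b x = obs a' b' x) ->
  (tv P P' <= 2%:E * @zeta R E)%E.
Proof.
move=> HP HP' mE hE; rewrite /tv; apply: lee_wpmul2l => //.
apply: ge_ereal_sup => _ [B mB <-].
have l1 := P_le P P' a b a' b' E HP HP' mE hE B mB.
have l2 := P_le P' P a' b' a b E HP' HP mE (fun x h => esym (hE x h)) B mB.
have f1 : P B \is a fin_num by apply: fin_num_measure.
have f2 : P' B \is a fin_num by apply: fin_num_measure.
have f3 : @zeta R E \is a fin_num by apply: fin_num_measure.
move: l1 l2; rewrite -(fineK f1) -(fineK f2) -(fineK f3) -!EFinD abse_EFin !lee_fin.
move=> l1 l2; rewrite ler_norml; apply/andP; split; lra.
Qed.

Lemma harm_bound (m : nat) : (1 <= m)%N ->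
  (8 * m%:R)^-1 + (4 * m%:R)^-1 <= (m.+1%:R)^-1 :> R.
Proof.
move=> m1; have e1 : 1 <= m%:R :> R by rewrite ler1n.
have e0 : 0 < m%:R :> R by lra.
have -> : (8 * m%:R)^-1 + (4 * m%:R)^-1 = (3 / 8) * (m%:R)^-1 :> R.
  by field; rewrite gt_eqF.
have h : (2 * m%:R)^-1 <= (m.+1%:R)^-1 :> R.
  by rewrite -natr1 lef_pV2 ?posrE; lra.
move: h; rewrite invfM.
have : 0 < m%:R^-1 :> R by rewrite invr_gt0.
set t := m%:R^-1; set s := m.+1%:R^-1; lra.
Qed.

Lemma cut_bounds (m : nat) : (1 <= m)%N ->
  [/\ -1 < - 2^-1 - (8 * m%:R)^-1 :> R, - 2^-1 - (8 * m%:R)^-1 < 2^-1 + (4 * m%:R)^-1 :> R,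
      2^-1 + (4 * m%:R)^-1 < 1 :> R, - 2^-1 - (8 * m%:R)^-1 < - 2^-1 :> R
    & 2^-1 < 2^-1 + (4 * m%:R)^-1 :> R].
Proof.
move=> m1; have e1 : 1 <= m%:R :> R by rewrite ler1n.
have e0 : 0 < m%:R :> R by lra.
have t0 : 0 < m%:R^-1 :> R by rewrite invr_gt0.
have t1 : m%:R^-1 <= 1 :> R by rewrite invf_le1.
rewrite !invfM; split; lra.
Qed.

Lemma tv_cvg (mu_ : nat -> probability (Omega R) R) (mu0 : probability (Omega R) R) :
  (forall m : nat, (1 <= m)%N ->
     is_info_structure (mu_ m) (- 2^-1 - (8 * m%:R)^-1) (2^-1 + (4 * m%:R)^-1)) ->
  is_info_structure mu0 (- 2^-1) (2^-1) ->
  tv (mu_ m) mu0 @[m --> \oo] --> 0%E.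
Proof.
move=> H1 H2.
apply: (@squeeze_cvge _ _ _ _ (fun _ => 0%E) _ (EFin \o harmonic)); last 2 first.
- exact: cvg_cst.
- exact: cvge_harmonic.
exists 1%N => // m /= m1.
have [c1 c2 c3 c4 c5] := cut_bounds m m1.
set am := - 2^-1 - (8 * m%:R)^-1 in c1 c2 c3 c4 c5 H1 *.
set bm := 2^-1 + (4 * m%:R)^-1 in c1 c2 c3 c4 c5 H1 *.
set E := `[am, - 2^-1]%classic `|` `[2^-1, bm]%classic.
have mE : measurable E by apply: measurableU.
have hE : forall x, ~ E x -> obs am bm x = obs (- 2^-1) (2^-1) x.
  move=> x nE.
  have n1 : ~ (am <= x <= - 2^-1) by move=> h; apply: nE; left; rewrite /= in_itv.
  have n2 : ~ (2^-1 <= x <= bm) by move=> h; apply: nE; right; rewrite /= in_itv.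
  rewrite /obs; case: ltP => h1; case: ltP => h2 //; try (exfalso; lra);
    case: leP => h3 //; case: leP => h4 //; exfalso;
    first [apply: n1; apply/andP; split; lra | apply: n2; apply/andP; split; lra | lra].
apply/andP; split.
  rewrite /tv; apply: mule_ge0 => //.
  apply: (@le_trans _ _ (`|mu_ m set0 - mu0 set0|%E)); first exact: abse_ge0.
  apply: ereal_sup_ubound; exists set0; [exact: measurable0 | by []].
apply: (le_trans (tv_le _ _ _ _ _ _ E (H1 m m1) H2 mE hE)).
apply: (le_trans (lee_wpmul2l _ (zeta_le E mE))) => //.
rewrite muleA -EFinM mulfV // mul1e.
apply: (le_trans (measureU2 _ _ _)) => //.
have L1 : (lebesgue_measure `[am, (- 2^-1)%R]%classic <= ((8 * m%:R)^-1)%:E :> \bar R)%E.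
  rewrite lebesgue_measure_itv /= lte_fin c4 -EFinD lee_fin.
  by rewrite le_eqVlt; apply/orP; left; apply/eqP; rewrite /am; ring.
have L2 : (lebesgue_measure `[2^-1%R, bm]%classic <= ((4 * m%:R)^-1)%:E :> \bar R)%E.
  rewrite lebesgue_measure_itv /= lte_fin c5 -EFinD lee_fin.
  by rewrite le_eqVlt; apply/orP; left; apply/eqP; rewrite /bm; ring.
apply: (le_trans (leeD L1 L2)); rewrite -EFinD lee_fin.
exact: harm_bound.
Qed.

Lemma mid2_ne0 (m : nat) : (1 <= m)%N ->
  ((- 2^-1 - (8 * m%:R)^-1) + (2^-1 + (4 * m%:R)^-1)) / 2 != 0 :> R.
Proof.
move=> m1; have e1 : 1 <= m%:R :> R by rewrite ler1n.
have e0 : 0 < m%:R :> R by lra.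
have t0 : 0 < m%:R^-1 :> R by rewrite invr_gt0.
move: t0; rewrite !invfM; set t := m%:R^-1 => t0; apply/eqP => h; lra.
Qed.

End S.

Theorem mainTheorem11 (R : realType)
  (mu_ : nat -> probability (Omega R) R) (mu : probability (Omega R) R) :
  (forall m : nat, (1 <= m)%N ->
     is_info_structure (mu_ m) (- 2^-1 - (8 * m%:R)^-1) (2^-1 + (4 * m%:R)^-1)) ->
  is_info_structure mu (- 2^-1) (2^-1) ->
  [/\ (tv (mu_ m) mu @[m --> \oo] --> 0%E),
      (forall m : nat, (1 <= m)%N ->
         (exists g1 g2, Nash (mu_ m) g1 g2) /\
         (forall g1 g2, Nash (mu_ m) g1 g2 -> J (mu_ m) (@c2 R) g1 g2 = 0%E)) &
      ((exists g1 g2, Nash mu g1 g2) /\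
       (forall g1 g2, Nash mu g1 g2 -> J mu (@c2 R) g1 g2 = (4^-1)%:E))].
Proof.
move=> H1 H2; split.
- exact: (tv_cvg R mu_ mu H1 H2).
- move=> m m1; have [c1 c2 c3 c4 c5] := cut_bounds R m m1.
  apply: (case_m R (mu_ m) _ _ c1 c2 c3 (H1 m m1)).
  + by apply/eqP => h; lra.
  + exact: mid2_ne0.
  + by apply/eqP => h; lra.
- exact: case_mu.
Qed.
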